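(* Let $n\ge1$. Let $|\Psi\rangle=\frac{1}{\sqrt2}(|01\rangle+|10\rangle)$ on a pair of qubits (first qubit Bob's, second Charlie's). For $x\in\{0,1\}^n$ define the $2n$-qubit state $|\tilde x\rangle=\bigotimes_{i=1}^n|\tilde x_i\rangle$, where $|\tilde x_i\rangle=|00\rangle$ if $x_i=0$ and $|\tilde x_i\rangle=|\Psi\rangle$ if $x_i=1$, the $i$-th pair consisting of Bob's $i$-th qubit and Charlie's $i$-th qubit. Let $A$ be any operator on Bob's $n$ qubits, and write $|x\rangle$ for Bob's computational basis state labeled by $x$. Then: (i) For $x,y\in\{0,1\}^n$, let $S=\{b\in\{0,1\}^n: b_i=0 \text{ whenever } x_iy_i\ne1\}$. Then $\langle\tilde x|A\otimes\mathbb I|\tilde y\rangle=c_{x,y}\sum_{b\in S}\langle x+b|A|y+b\rangle$ for a nonzero constant $c_{x,y}$ independent of $A$ (addition mod 2 componentwise). (ii) If $\langle\tilde x|A\otimes\mathbb I|\tilde y\rangle=0$ for all $x\ne y\in\{0,1\}^n$, then $\langle x|A|y\rangle=0$ for all $x\neq y\in\{0,1\}^n$. (iii) If $\langle\tilde x|A\otimes\mathbb I|\tilde x\rangle=k$ for all $x\in\{0,1\}^n$, then $\langle x|A|x\rangle=k$ for all $x\in\{0,1\}^n$.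
   Context: $\mathbb I$ denotes the identity on Charlie's $n$ qubits. For binary strings, $x+b$ denotes componentwise addition modulo 2. *)

(* Defs.v *)
From HB Require Import structures.
From mathcomp Require Import all_boot all_order all_algebra all_field all_character.
Set Implicit Arguments. Unset Strict Implicit. Unset Printing Implicit Defensive.
Import Order.TTheory GRing.Theory Num.Theory.
Local Open Scope ring_scope.

Definition bits (n : nat) := {ffun 'I_n -> bool}.

Definition bxor n (x b : bits n) : bits n := [ffun i => x i (+) b i].

(* An operator on a finite-dimensional space with orthonormal basis indexed
   by the finite type I, given by its matrix entries  <p|M|q> = M p q. *)
Definition operator (I : finType) := I -> I -> algC.
Definition ket (I : finType) := I -> algC.

Definition braket (I : finType) (u : ket I) (M : operator I) (v : ket I) : algC :=
  \sum_(p : I) \sum_(q : I) (u p)^* * M p q * v q.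

Definition basis_ket (I : finType) (x : I) : ket I := fun p => (p == x)%:R.

(* Joint Bob+Charlie basis: (Bob's bit string, Charlie's bit string);
   the i-th pair is (Bob's i-th qubit, Charlie's i-th qubit). *)
Definition BC (n : nat) := (bits n * bits n)%type.

(* A (x) I : A acts on Bob's register, identity on Charlie's. *)
Definition tensorI n (A : operator (bits n)) : operator (BC n) :=
  fun p q => A p.1 q.1 * (p.2 == q.2)%:R.

Definition psi_amp (b c : bool) : algC := if b != c then (sqrtC 2)^-1 else 0.

Definition pair_amp (xi b c : bool) : algC :=
  if xi then psi_amp b c else (~~ b && ~~ c)%:R.

Definition xtilde n (x : bits n) : ket (BC n) :=
  fun p => \prod_(i < n) pair_amp (x i) (p.1 i) (p.2 i).

Definition Sxy n (x y : bits n) : {set bits n} :=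
  [set b : bits n | [forall i, ~~ (x i && y i) ==> ~~ b i]].

(* Main.v *)
Require Import Defs.
From HB Require Import structures.
From mathcomp Require Import all_boot all_order all_algebra all_field.
Import Order.TTheory GRing.Theory Num.Theory.
Local Open Scope ring_scope.
Set Implicit Arguments. Unset Strict Implicit. Unset Printing Implicit Defensive.

Definition s2 : algC := (sqrtC 2)^-1.
Definition kap (a b : bool) : algC := (if a then s2 else 1) * (if b then s2 else 1).
Definition cxy n (x y : bits n) : algC := \prod_(i < n) kap (x i) (y i).

Lemma s2_conj : s2^* = s2.
Proof. by apply: geC0_conj; rewrite /s2 invr_ge0 sqrtC_ge0 ler0n. Qed.

Lemma s2_neq0 : s2 != 0.
Proof. by rewrite /s2 invr_eq0 sqrtC_eq0 pnatr_eq0. Qed.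

Lemma pair_amp_conj a b c : (pair_amp a b c)^* = pair_amp a b c.
Proof. by rewrite /pair_amp /psi_amp; case: a b c => [] [] [] //=; rewrite ?s2_conj ?conjC0 ?conjC_nat. Qed.

Lemma braket_basis (I : finType) (u v : I) A :
  braket (basis_ket u) A (basis_ket v) = A u v.
Proof.
rewrite /braket (bigD1 u) //= [X in _ + X]big1; last first.
  move=> p Hp; rewrite big1 // => q _.
  by rewrite /basis_ket (negbTE Hp) conjC0 !mul0r.
rewrite addr0 (bigD1 v) //= [X in _ + X]big1; last first.
  by move=> q Hq; rewrite /basis_ket (negbTE Hq) mulr0.
by rewrite /basis_ket !eqxx conjC1 mul1r mulr1 addr0.
Qed.

Lemma prod_natb n (P : 'I_n -> bool) :
  \prod_(i < n) ((P i)%:R : algC) = ([forall i, P i])%:R.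
Proof.
case: (boolP [forall i, P i]) => [/forallP H|/forallPn [i Hi]].
  by rewrite big1 // => i _; rewrite H.
by rewrite (bigD1 i) //= (negbTE Hi) mul0r.
Qed.

Lemma xt_prod n (x y b1 b2 c : bits n) :
  (xtilde x (b1, c))^* * xtilde y (b2, c) =
  \prod_(i < n) (pair_amp (x i) (b1 i) (c i) * pair_amp (y i) (b2 i) (c i)).
Proof.
rewrite /xtilde rmorph_prod big_split /=; congr (_ * _).
by apply: eq_bigr => i _; rewrite pair_amp_conj.
Qed.

Lemma lhs_expand n (x y : bits n) A :
  braket (xtilde x) (tensorI A) (xtilde y) =
  \sum_(b1 : bits n) \sum_(b2 : bits n) A b1 b2 *
    \prod_(i < n) \sum_(c : bool) (pair_amp (x i) (b1 i) c * pair_amp (y i) (b2 i) c).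
Proof.
rewrite /braket.
have -> : \sum_(p : BC n) \sum_(q : BC n) (xtilde x p)^* * tensorI A p q * xtilde y q =
   \sum_(b1 : bits n) \sum_(c : bits n) \sum_(b2 : bits n) \sum_(c' : bits n)
      (xtilde x (b1, c))^* * tensorI A (b1, c) (b2, c') * xtilde y (b2, c').
  rewrite [RHS]pair_bigA; apply: eq_bigr => -[b1 c] _ /=.
  by rewrite [RHS]pair_bigA; apply: eq_bigr => -[b2 c'] _.
apply: eq_bigr => b1 _.
rewrite exchange_big /=; apply: eq_bigr => b2 _.
rewrite (bigA_distr_bigA (fun i j => pair_amp (x i) (b1 i) j * pair_amp (y i) (b2 i) j)) /=.
rewrite mulr_sumr; apply: eq_bigr => c _.
rewrite (bigD1 c) //= big1 => [|c' Hc']; last first.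
  by rewrite /tensorI /= eq_sym (negbTE Hc') !mulr0 mul0r.
rewrite addr0 /tensorI /= eqxx mulr1 -xt_prod.
by rewrite mulrCA mulrA.
Qed.

Definition hb (a a' u v c : bool) : bool :=
  [&& ~~ (a && a') ==> ~~ c, a (+) c == u & a' (+) c == v].

Lemma forall_eq n (x y c b1 b2 : bits n) :
  [forall i, hb (x i) (y i) (b1 i) (b2 i) (c i)] =
  [&& c \in Sxy x y, bxor x c == b1 & bxor y c == b2].
Proof.
rewrite /Sxy inE /hb; apply/forallP/and3P => [H|[/forallP H1 /eqP <- /eqP <-] i].
  split.
  - by apply/forallP => i; case/and3P: (H i).
  - by apply/eqP/ffunP => i; rewrite ffunE; case/and3P: (H i) => _ /eqP.
  - by apply/eqP/ffunP => i; rewrite ffunE; case/and3P: (H i) => _ _ /eqP.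
by rewrite !ffunE !eqxx (H1 i).
Qed.

Lemma rhs_expand n (x y : bits n) A :
  \sum_(b in Sxy x y) A (bxor x b) (bxor y b) =
  \sum_(b1 : bits n) \sum_(b2 : bits n) A b1 b2 *
    \prod_(i < n) \sum_(c : bool) ((hb (x i) (y i) (b1 i) (b2 i) c)%:R : algC).
Proof.
have E : forall b1 b2 : bits n,
    \prod_(i < n) \sum_(c : bool) ((hb (x i) (y i) (b1 i) (b2 i) c)%:R : algC) =
    \sum_(c : bits n) ([&& c \in Sxy x y, bxor x c == b1 & bxor y c == b2])%:R.
  move=> b1 b2.
  rewrite (bigA_distr_bigA (fun i j => ((hb (x i) (y i) (b1 i) (b2 i) j)%:R : algC))) /=.
  by apply: eq_bigr => c _; rewrite prod_natb forall_eq.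
symmetry.
under eq_bigr => b1 _ do under eq_bigr => b2 _ do rewrite E mulr_sumr.
under eq_bigr => b1 _ do rewrite exchange_big.
rewrite exchange_big /= [RHS]big_mkcond /=; apply: eq_bigr => c _.
case: (boolP (c \in Sxy x y)) => Hc /=; last first.
  by rewrite big1 // => b1 _; rewrite big1 // => b2 _; rewrite mulr0.
rewrite (bigD1 (bxor x c)) //= [X in _ + X]big1; last first.
  by move=> b1 Hb1; rewrite big1 // => b2 _; rewrite eq_sym (negbTE Hb1) mulr0.
rewrite addr0 (bigD1 (bxor y c)) //= [X in _ + X]big1; last first.
  by move=> b2 Hb2; rewrite eq_sym (negbTE Hb2) andbF mulr0.
by rewrite !eqxx mulr1 addr0.
Qed.

Lemma part1 n (x y : bits n) A :
  braket (xtilde x) (tensorI A) (xtilde y) =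
  cxy x y * \sum_(b in Sxy x y) braket (basis_ket (bxor x b)) A (basis_ket (bxor y b)).
Proof.
under [X in _ = _ * X]eq_bigr => b _ do rewrite braket_basis.
rewrite lhs_expand rhs_expand mulr_sumr; apply: eq_bigr => b1 _.
rewrite mulr_sumr; apply: eq_bigr => b2 _.
rewrite mulrCA; congr (_ * _).
rewrite /cxy -big_split /=; apply: eq_bigr => i _.
rewrite !big_bool /kap /hb /pair_amp /psi_amp.
case: (x i) (y i) (b1 i) (b2 i) => [] [] [] [] /=;
  rewrite /s2 ?mulr0n ?mulr1n ?mulr0 ?mul0r ?mulr1 ?mul1r ?addr0 ?add0r.
all: try by [].
all: try (by rewrite mulr0).
all: by rewrite mulr1.
Qed.

Lemma cxy_neq0 n (x y : bits n) : cxy x y != 0.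
Proof.
rewrite /cxy prodf_seq_neq0; apply/allP => i _ /=.
by rewrite /kap mulf_neq0 //; case: ifP => _; rewrite ?s2_neq0 ?oner_neq0.
Qed.

Definition bz n : bits n := [ffun=> false].

Lemma bxor0 n (x : bits n) : bxor x (bz n) = x.
Proof. by apply/ffunP => i; rewrite !ffunE addbF. Qed.

Lemma bz_in n (x y : bits n) : bz n \in Sxy x y.
Proof. by rewrite inE; apply/forallP => i; rewrite ffunE implybT. Qed.

Definition cnt n (x y : bits n) := #|[set i | x i && y i]|.

Lemma cnt_lt n (x y b : bits n) : b \in Sxy x y -> b != bz n ->
  (cnt (bxor x b) (bxor y b) < cnt x y)%N.
Proof.
rewrite inE => /forallP Hb Hb0.
have : ~~ [forall i, ~~ b i].
  apply: contra Hb0 => /forallP H; apply/eqP/ffunP => i; rewrite ffunE.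
  exact/negbTE/H.
case/forallPn => i; rewrite negbK => bi.
apply: proper_card; apply/properP; split.
  apply/subsetP => j; rewrite !inE !ffunE.
  by move: (Hb j); case: (x j) (y j) (b j) => [] [] [].
exists i; rewrite !inE ?ffunE; move: (Hb i) bi; case: (x i) (y i) (b i) => [] [] [] //.
Qed.

Lemma zero_ind n (P : bits n -> bits n -> bool) (F : bits n -> bits n -> algC) :
  (forall x y, P x y -> \sum_(b in Sxy x y) F (bxor x b) (bxor y b) = 0) ->
  (forall x y b, P x y -> P (bxor x b) (bxor y b)) ->
  forall x y, P x y -> F x y = 0.
Proof.
move=> HS HP x y.
suff H : forall m x y, (cnt x y <= m)%N -> P x y -> F x y = 0 by apply: H (leqnn _).
have step : forall x y, P x y ->
   (forall b, b \in Sxy x y -> b != bz n -> F (bxor x b) (bxor y b) = 0) -> F x y = 0.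
  move=> x1 y1 P1 Q; have := HS x1 y1 P1.
  rewrite (bigD1 (bz n)) ?bz_in //= !bxor0 big1 ?addr0 // => b /andP[Hb Hb0].
  exact: Q.
elim=> [|m IH] x1 y1 Hc P1; apply: step => // b Hb Hb0.
  by have := cnt_lt Hb Hb0; rewrite ltnNge (leq_trans Hc).
apply: IH; last exact: HP.
by rewrite -ltnS (leq_trans (cnt_lt Hb Hb0)).
Qed.

Lemma s22 : s2 * s2 * 2 = 1.
Proof.
rewrite /s2 -invfM -expr2 sqrtCK mulVf //.
by rewrite pnatr_eq0.
Qed.

Lemma card_S n (x : bits n) : #|Sxy x x|%:R * cxy x x = 1.
Proof.
have -> : (#|Sxy x x|%:R : algC) = \prod_(i < n) \sum_(c : bool)
            ((~~ (x i && x i) ==> ~~ c)%:R : algC).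
  rewrite (bigA_distr_bigA (fun i c => ((~~ (x i && x i) ==> ~~ c)%:R : algC))) /=.
  rewrite -sum1_card natr_sum [LHS]big_mkcond /=; apply: eq_bigr => b _.
  by rewrite prod_natb inE; case: ifP.
rewrite /cxy -big_split /=; apply: big1 => i _.
rewrite big_bool /kap; case: (x i) => /=.
  by transitivity (s2 * s2 * 2); [rewrite mulrC | exact: s22].
by rewrite !mulr1 add0r.
Qed.

Theorem lemma2 (n : nat) (hn : (1 <= n)%N) :
  (forall x y : bits n, exists c : algC, c != 0 /\
     forall A : operator (bits n),
       braket (xtilde x) (tensorI A) (xtilde y) =
       c * \sum_(b in Sxy x y)
             braket (basis_ket (bxor x b)) A (basis_ket (bxor y b)))
  /\
  (forall A : operator (bits n),
     (forall x y : bits n, x != y ->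
        braket (xtilde x) (tensorI A) (xtilde y) = 0) ->
     forall x y : bits n, x != y ->
        braket (basis_ket x) A (basis_ket y) = 0)
  /\
  (forall (A : operator (bits n)) (k : algC),
     (forall x : bits n, braket (xtilde x) (tensorI A) (xtilde x) = k) ->
     forall x : bits n, braket (basis_ket x) A (basis_ket x) = k).
Proof.
split; [|split].
- move=> x y; exists (cxy x y); split; first exact: cxy_neq0.
  exact: part1.
- move=> A H x y Hxy; rewrite braket_basis.
  apply: (@zero_ind n (fun x y => x != y) A) Hxy.
    move=> x1 y1 H1; have := H x1 y1 H1; rewrite part1 => /eqP.
    rewrite mulf_eq0 (negbTE (cxy_neq0 _ _)) /= => /eqP E.
    apply: (etrans _ E); by apply: eq_bigr => b _; rewrite braket_basis.
  move=> x1 y1 b; apply: contra => /eqP E; apply/eqP/ffunP => i.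
  move/ffunP: E => /(_ i); rewrite !ffunE => /(congr1 (addb^~ (b i))).
  by rewrite -!addbA addbb !addbF.
- move=> A k H x; rewrite braket_basis; apply/eqP; rewrite -subr_eq0; apply/eqP.
  apply: (@zero_ind n (fun x y => x == y) (fun x y => A x y - k)) (eqxx x); last first.
    by move=> x1 y1 b /eqP ->.
  move=> x1 y1 /eqP <-.
  have := H x1; rewrite part1.
  under eq_bigr => b _ do rewrite braket_basis.
  move=> E; rewrite sumrB sumr_const.
  apply/eqP; rewrite -(mulIr_eq0 _ (mulIf (cxy_neq0 x1 x1))).
  by rewrite mulrBl [X in X - _]mulrC E -mulr_natr -mulrA card_S mulr1 subrr.
Qed.
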